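(* Let $n$, $U=U_{n+1}$, $E_{\mathcal M}$, $F^{\mathcal M}$, $E_{\mathcal M_1\cdots\mathcal M_k}$, $F^{\mathcal N_1\cdots\mathcal N_k}$ and $\mathbb{P}_k$ be as in the context. Let $p\ge2$ and suppose there are real numbers $a_k$ ($k=2,\dots,p$) with $\langle E_{\mathcal M_1\cdots\mathcal M_k}|F^{\mathcal N_1\cdots\mathcal N_k}\rangle=a_k(\mathbb{P}_k)_{\mathcal M_1\cdots\mathcal M_k}{}^{\mathcal N_1\cdots\mathcal N_k}$ for $k=2,\dots,p$; put $a_1=1$ and $\mathbb{P}_1=\delta$. For $k=1,\dots,p$ define $${\tt Y}^{\mathcal N_1\cdots\mathcal N_k}{}_{\mathcal M_1\cdots\mathcal M_{k+1}}=\frac1{a_k}[F^{\mathcal N_1\cdots\mathcal N_k},E_{\mathcal M_1\cdots\mathcal M_{k+1}}],\qquad {\tt X}_{\mathcal M|\mathcal N_1\cdots\mathcal N_k}{}^{\mathcal P_1\cdots\mathcal P_k}=\frac1{a_k}[E_{\mathcal M},[\![E_{\mathcal N_1\cdots\mathcal N_k},F^{\mathcal P_1\cdots\mathcal P_k}]\!]]$$ (with $E_{\mathcal N_1}$, $F^{\mathcal P_1}$ meaning the basis elements when $k=1$). Then, summing over repeated indices, $${\tt X}_{\mathcal M|\mathcal N_1\cdots\mathcal N_p}{}^{\mathcal P_1\cdots\mathcal P_p}=(\mathbb{P}_p)_{\mathcal K_1\cdots\mathcal K_p}{}^{\mathcal P_1\cdots\mathcal P_p}\sum_{i=1}^p\delta_{\mathcal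 N_1}{}^{\mathcal K_1}\cdots\delta_{\mathcal N_{i-1}}{}^{\mathcal K_{i-1}}{\tt X}_{\mathcal M|\mathcal N_i}{}^{\mathcal K_i}\delta_{\mathcal N_{i+1}}{}^{\mathcal K_{i+1}}\cdots\delta_{\mathcal N_p}{}^{\mathcal K_p},$$ $${\tt Y}^{\mathcal N_1\cdots\mathcal N_p}{}_{\mathcal M_1\cdots\mathcal M_{p+1}}=-(\mathbb{P}_p)_{\mathcal K_1\cdots\mathcal K_p}{}^{\mathcal N_1\cdots\mathcal N_p}\delta_{\mathcal M_1}{}^{\mathcal K_1}{\tt Y}^{\mathcal K_2\cdots\mathcal K_p}{}_{\mathcal M_2\cdots\mathcal M_{p+1}}-{\tt X}_{\mathcal M_1|\mathcal M_2\cdots\mathcal M_{p+1}}{}^{\mathcal N_1\cdots\mathcal N_p},$$ $${\tt Y}^{\mathcal M}{}_{\mathcal N\mathcal P}=-{\tt X}_{\mathcal N|\mathcal P}{}^{\mathcal M}-{\tt X}_{\mathcal P|\mathcal N}{}^{\mathcal M}.$$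
   Context: Fix an integer $n$ with $4\le n\le 8$. $E_n$ denotes the split real Lie algebra with Dynkin diagram on nodes $1,\dots,n$, where nodes $1,\dots,n-1$ form a chain and node $n$ is joined to node $n-3$. Extend this diagram by a node $0$ joined to node $1$, and let $A=(A_{IJ})_{I,J=0,\dots,n}$ with $A_{00}=0$, $A_{ii}=2$ for $i\ge1$, $A_{IJ}=-1$ if $I\neq J$ are joined and $0$ otherwise. Let $\tilde U$ be the real Lie superalgebra generated by $e_I,f_I,h_I$ ($I=0,\dots,n$), all even except $e_0,f_0$ which are odd, subject to $[\![h_I,e_J]\!]=A_{IJ}e_J$, $[\![h_I,f_J]\!]=-A_{IJ}f_J$, $[\![e_I,f_J]\!]=\delta_{IJ}h_J$, $[\![h_I,h_J]\!]=0$, where $[\![x,y]\!]$ is the superbracket (written $\{x,y\}$ when both are odd, where it is symmetric, and $[x,y]$ otherwise). $U=U_{n+1}$ is the quotient of $\tilde U$ by its maximal ideal intersecting $\mathrm{span}\{h_I\}$ trivially (equivalently by the ideal generated by $(\mathrm{ad}\,e_i)^{1-A_{iJ}}(e_J)$, $(\mathrm{ad}\,f_i)^{1-A_{iJ}}(f_J)$, $i=1,\dots,n$, $J=0,\dots,n$). $U=\bigoplus_p U_p$ is $\mathbb{Z}$-graded with $e_0\in U_{-1}$, $f_0\in U_1$, all other generators in $U_0$; $U_p$ has parity $p\bmod 2$ and $[\![U_p,U_q]\!]\subseteq U_{p+q}$. Each $U_p$ is a module over the subalgebra $E_n$ generated by $e_i,f_i,h_i$ ($i\ge1$). $U$ carries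 an invariant, supersymmetric bilinear form $\langle\cdot|\cdot\rangle$ with $\langle U_p|U_q\rangle=0$ unless $p+q=0$, $\langle h_I|h_J\rangle=A_{IJ}$, $\langle e_I|f_J\rangle=\delta_{IJ}$, $\langle e_I|e_J\rangle=\langle f_I|f_J\rangle=0$. Choose bases $\{E_{\mathcal M}\}$ of $U_{-1}$ and $\{F^{\mathcal M}\}$ of $U_1$ with $\langle E_{\mathcal M}|F^{\mathcal N}\rangle=\delta_{\mathcal M}{}^{\mathcal N}$. For $k\ge2$ set $E_{\mathcal M_1\cdots\mathcal M_k}=[\![E_{\mathcal M_1},[\![E_{\mathcal M_2},\ldots,[\![E_{\mathcal M_{k-1}},E_{\mathcal M_k}]\!]\cdots]\!]]\!]$ and $F^{\mathcal M_1\cdots\mathcal M_k}$ analogously with $F$'s; these span $U_{-k}$ and $U_k$. For $k\ge2$, $\mathbb{P}_k$ is the projector onto the $E_n$-representation $U_{-k}$ inside the $k$-fold tensor power of $U_{-1}$: an array $(\mathbb{P}_k)_{\mathcal M_1\cdots\mathcal M_k}{}^{\mathcal N_1\cdots\mathcal N_k}$, idempotent as a matrix, with $E_{\mathcal M_1\cdots\mathcal M_k}=(\mathbb{P}_k)_{\mathcal M_1\cdots\mathcal M_k}{}^{\mathcal N_1\cdots\mathcal N_k}E_{\mathcal N_1\cdots\mathcal N_k}$ and $F^{\mathcal N_1\cdots\mathcal N_k}=(\mathbb{P}_k)_{\mathcal M_1\cdots\mathcal M_k}{}^{\mathcal N_1\cdots\mathcal N_k}F^{\mathcal M_1\cdots\mathcal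 M_k}$. *)

(* Defs.v *)
From HB Require Import structures.
From mathcomp Require Import all_boot all_order all_algebra.
From mathcomp Require Import reals.
Set Implicit Arguments. Unset Strict Implicit. Unset Printing Implicit Defensive.
Import Order.TTheory GRing.Theory Num.Theory.
Local Open Scope ring_scope.

(* edge a b (a,b as nats): the chain 0-1-...-(n-1) (node 0 attached to node 1,
   nodes 1..n-1 a chain) plus node n joined to node n-3. *)
Definition dyn_edge (n a b : nat) : bool :=
  (((b == a.+1) && (b <= n.-1)) || ((a == n - 3) && (b == n)))%N.
Definition joined (n : nat) (I J : 'I_n.+1) : bool :=
  dyn_edge n I J || dyn_edge n J I.
Definition cartanA (R : nzRingType) (n : nat) (I J : 'I_n.+1) : R :=
  if I == J then (if val I == 0%N then 0 else 2)
  else if joined I J then -1 else 0.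

Section SuperAlg.
Variables (R : realType) (V : lmodType R).

Definition subspace (S : V -> Prop) : Prop :=
  S 0 /\ (forall x y, S x -> S y -> S (x + y)) /\ (forall (c : R) x, S x -> S (c *: x)).

Definition homog (ev od : V -> Prop) (b : bool) (x : V) : Prop :=
  if b then od x else ev x.

Definition bilinear_br (br : V -> V -> V) : Prop :=
  (forall x (c : R) y z, br x (c *: y + z) = c *: br x y + br x z) /\
  (forall z (c : R) x y, br (c *: x + y) z = c *: br x z + br y z).

Definition is_lie_superalgebra (ev od : V -> Prop) (br : V -> V -> V) : Prop :=
  [/\ subspace ev, subspace od,
      (forall x, exists y z, [/\ ev y, od z & x = y + z]),
      (forall x, ev x -> od x -> x = 0) &
      [/\ bilinear_br br,
          (forall s t x y, homog ev od s x -> homog ev od t y ->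
              homog ev od (addb s t) (br x y)),
          (forall s t x y, homog ev od s x -> homog ev od t y ->
              br x y = - ((-1) ^+ (s && t) *: br y x)) &
          (forall s t x y z, homog ev od s x -> homog ev od t y ->
              br x (br y z) = br (br x y) z + (-1) ^+ (s && t) *: br y (br x z))]].

Inductive gen_by (br : V -> V -> V) (G : V -> Prop) : V -> Prop :=
| gen_base x : G x -> gen_by br G x
| gen_zero : gen_by br G 0
| gen_add x y : gen_by br G x -> gen_by br G y -> gen_by br G (x + y)
| gen_scale (c : R) x : gen_by br G x -> gen_by br G (c *: x)
| gen_br x y : gen_by br G x -> gen_by br G y -> gen_by br G (br x y).

Definition is_ideal (br : V -> V -> V) (J : V -> Prop) : Prop :=
  subspace J /\ (forall x y, J y -> J (br x y) /\ J (br y x)).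

Variable n : nat.

Inductive Ugr (br : V -> V -> V) (e f h : 'I_n.+1 -> V) : int -> V -> Prop :=
| gr_e0 : Ugr br e f h (-1) (e ord0)
| gr_f0 : Ugr br e f h 1 (f ord0)
| gr_e i : i != ord0 -> Ugr br e f h 0 (e i)
| gr_f i : i != ord0 -> Ugr br e f h 0 (f i)
| gr_h i : Ugr br e f h 0 (h i)
| gr_zero p : Ugr br e f h p 0
| gr_add p x y : Ugr br e f h p x -> Ugr br e f h p y -> Ugr br e f h p (x + y)
| gr_scale p (c : R) x : Ugr br e f h p x -> Ugr br e f h p (c *: x)
| gr_br p q x y : Ugr br e f h p x -> Ugr br e f h q y -> Ugr br e f h (p + q) (br x y).

(* (V, ev, od, br) together with e_I, f_I, h_I is the Lie superalgebra
   U = U_{n+1}: generated by e,f,h subject to the defining relations, and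
   the quotient of the free one by the maximal ideal meeting span{h_I}
   trivially (equivalently: h_I independent and every nonzero ideal meets
   span{h_I}). *)
Definition is_U (ev od : V -> Prop) (br : V -> V -> V) (e f h : 'I_n.+1 -> V) : Prop :=
  [/\ is_lie_superalgebra ev od br,
      [/\ od (e ord0), od (f ord0),
          (forall i, i != ord0 -> ev (e i) /\ ev (f i)) &
          (forall I, ev (h I))],
      [/\ (forall I J, br (h I) (e J) = cartanA R I J *: e J),
          (forall I J, br (h I) (f J) = - (cartanA R I J *: f J)),
          (forall I J, br (e I) (f J) = (I == J)%:R *: h J) &
          (forall I J, br (h I) (h J) = 0)],
      (forall x, gen_by br (fun y => exists I, [\/ y = e I, y = f I | y = h I]) x) &
      [/\ (forall c : 'I_n.+1 -> R, \sum_I c I *: h I = 0 -> forall I, c I = 0) &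
          (forall J, is_ideal br J ->
             (forall x, J x -> (exists c : 'I_n.+1 -> R, x = \sum_I c I *: h I) -> x = 0) ->
             forall x, J x -> x = 0)]].

Definition is_U_form (ev od : V -> Prop) (br : V -> V -> V) (e f h : 'I_n.+1 -> V)
    (form : V -> V -> R) : Prop :=
  [/\ (forall x (c : R) y z, form x (c *: y + z) = c * form x y + form x z) /\
      (forall z (c : R) x y, form (c *: x + y) z = c * form x z + form y z),
      (forall x y z, form (br x y) z = form x (br y z)),
      (forall s t x y, homog ev od s x -> homog ev od t y ->
          form x y = (-1) ^+ (s && t) * form y x),
      (forall p q x y, Ugr br e f h p x -> Ugr br e f h q y -> p + q != 0 -> form x y = 0) &
      [/\ (forall I J, form (h I) (h J) = cartanA R I J),
          (forall I J, form (e I) (f J) = (I == J)%:R),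
          (forall I J, form (e I) (e J) = 0) &
          (forall I J, form (f I) (f J) = 0)]].

Definition is_basis_of (M : finType) (S : V -> Prop) (B : M -> V) : Prop :=
  [/\ (forall m, S (B m)),
      (forall c : M -> R, \sum_m c m *: B m = 0 -> forall m, c m = 0) &
      (forall x, S x -> exists c : M -> R, x = \sum_m c m *: B m)].

Variable M : finType.

Fixpoint nest (br : V -> V -> V) (G : M -> V) (s : seq M) : V :=
  match s with
  | [::] => 0
  | [:: m] => G m
  | m :: s' => br (G m) (nest br G s')
  end.

Definition Yop (br : V -> V -> V) (E F : M -> V) (a : nat -> R) (N Ms : seq M) : V :=
  (a (size N))^-1 *: br (nest br F N) (nest br E Ms).

Definition Xop (br : V -> V -> V) (E F : M -> V) (a : nat -> R) (m : M) (N Q : seq M) : V :=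
  (a (size N))^-1 *: br (E m) (br (nest br E N) (nest br F Q)).

End SuperAlg.

(* Main.v *)
Require Import Defs.
From HB Require Import structures.
From mathcomp Require Import all_boot all_order all_algebra zify ring.
From mathcomp Require Import reals.
Import Order.TTheory GRing.Theory Num.Theory.
Local Open Scope ring_scope.
Set Implicit Arguments. Unset Strict Implicit. Unset Printing Implicit Defensive.

Lemma oddzD (p q : int) : odd (absz (p + q)) = odd (absz p) (+) odd (absz q).
Proof.
have := modn2 (absz (p + q)); have := modn2 (absz p); have := modn2 (absz q).
case: (odd (absz (p+q))); case: (odd (absz p)); case: (odd (absz q)) => //= ; lia.
Qed.

Section Tup.
Variables (R : comRingType) (T : finType).

Lemma big_tuple_cons (W : zmodType) k (G : k.+1.-tuple T -> W) :
  \sum_K G K = \sum_x \sum_(K' : k.-tuple T) G (cons_tuple x K').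
Proof.
rewrite pair_big /=.
rewrite (reindex (fun p : T * k.-tuple T => cons_tuple p.1 p.2)) //.
exists (fun K => (thead K, behead_tuple K)).
  by move=> [x K'] _ /=; congr (_, _); apply: val_inj.
by move=> K _; rewrite [RHS]tuple_eta; apply: val_inj.
Qed.

Lemma big_tuple0 (W : zmodType) (G : 0.-tuple T -> W) : \sum_K G K = G [tuple].
Proof.
rewrite (eq_bigr (fun _ => G [tuple])) => [|K _]; last by rewrite tuple0.
by rewrite sumr_const card_tuple expn0.
Qed.

Lemma sum_delta (m : T) (G : T -> R) : \sum_x (x == m)%:R * G x = G m.
Proof.
rewrite (bigD1 m) //= eqxx mul1r big1 ?addr0 // => x Hx.
by rewrite (negPf Hx) mul0r.
Qed.

Definition tset p (N : p.-tuple T) (i : 'I_p) (k : T) : p.-tuple T :=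
  [tuple (if j == i then k else tnth N j) | j < p].

Lemma tset_val p x0 (N : p.-tuple T) i k : val (tset N i k) = set_nth x0 N i k.
Proof.
apply: (@eq_from_nth _ x0).
  by rewrite size_set_nth !size_tuple; apply/esym/maxn_idPr; rewrite ltn_ord.
move=> j; rewrite size_tuple => Hj.
rewrite nth_set_nth /= -(tnth_nth x0 (tset N i k) (Ordinal Hj)) tnth_mktuple.
case: ifP => [/eqP <- | Hne]; first by rewrite eqxx.
have -> : j == i = false by apply/negbTE; move: Hne; apply: contraFN => /eqP Hji; apply/eqP/val_inj.
by rewrite (tnth_nth x0).
Qed.

Lemma tset_i p (N : p.-tuple T) i k : tnth (tset N i k) i = k.
Proof. by rewrite tnth_mktuple eqxx. Qed.

Lemma reidx1 p (N : p.-tuple T) (i : 'I_p) (Phi : p.-tuple T -> R) (g : T -> R) :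
  \sum_K Phi K * \prod_(j < p | j != i) (tnth N j == tnth K j)%:R * g (tnth K i) =
  \sum_k Phi (tset N i k) * g k.
Proof.
rewrite (partition_big (fun K => tnth K i) xpredT) //.
apply: eq_bigr => k _.
rewrite (bigD1 (tset N i k)) /=; last by rewrite tset_i.
rewrite tset_i big1 => [|j Hj]; last by rewrite tnth_mktuple (negPf Hj) eqxx.
rewrite mulr1 big1 ?addr0 // => K /andP [/eqP HKi HKne].
have /existsP [j Hj] : [exists j, tnth K j != tnth (tset N i k) j].
  apply: contraR HKne => /existsPn H; apply/eqP/eq_from_tnth => j.
  exact/eqP/negbNE/H.
have Hji : j != i by apply: contraNneq Hj => ->; rewrite tset_i HKi.
rewrite (bigD1 j) //=; move: Hj; rewrite tnth_mktuple (negPf Hji) eq_sym => /negPf ->.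
by rewrite mul0r mulr0 mul0r.
Qed.

End Tup.

Section Work.
Variables (R : realType) (V : lmodType R) (ev od : V -> Prop) (br : V -> V -> V).
Hypothesis Hlie : is_lie_superalgebra ev od br.

Let hom := homog ev od.

Lemma br_bil : bilinear_br br. Proof. by case: Hlie => _ _ _ _ []. Qed.
Lemma br_par s t x y : hom s x -> hom t y -> hom (addb s t) (br x y).
Proof. by case: Hlie => _ _ _ _ [] _ H _ _; apply: H. Qed.
Lemma br_anti s t x y : hom s x -> hom t y -> br x y = - ((-1) ^+ (s && t) *: br y x).
Proof. by case: Hlie => _ _ _ _ [] _ _ H _; apply: H. Qed.
Lemma br_jac s t x y z : hom s x -> hom t y ->
  br x (br y z) = br (br x y) z + (-1) ^+ (s && t) *: br y (br x z).
Proof. by case: Hlie => _ _ _ _ [] _ _ _ H; apply: H. Qed.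

Lemma br0r x : br x 0 = 0.
Proof.
have H : br x 0 = br x 0 + br x 0 by have := br_bil.1 x 1 0 0; rewrite scaler0 addr0 scale1r.
by apply: (@addrI _ (br x 0)); rewrite addr0 -H.
Qed.
Lemma br0l x : br 0 x = 0.
Proof.
have H : br 0 x = br 0 x + br 0 x by have := br_bil.2 x 1 0 0; rewrite scaler0 addr0 scale1r.
by apply: (@addrI _ (br 0 x)); rewrite addr0 -H.
Qed.
Lemma brDr x y z : br x (y + z) = br x y + br x z.
Proof. by have := br_bil.1 x 1 y z; rewrite !scale1r. Qed.
Lemma brDl x y z : br (x + y) z = br x z + br y z.
Proof. by have := br_bil.2 z 1 x y; rewrite !scale1r. Qed.
Lemma brZr x c y : br x (c *: y) = c *: br x y.
Proof. by have := br_bil.1 x c y 0; rewrite !addr0 br0r addr0. Qed.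
Lemma brZl x c y : br (c *: x) y = c *: br x y.
Proof. by have := br_bil.2 y c x 0; rewrite !addr0 br0l addr0. Qed.
Lemma brNr x y : br x (- y) = - br x y.
Proof. by rewrite -scaleN1r brZr scaleN1r. Qed.
Lemma br_sumr x I (r : seq I) (P : pred I) (g : I -> V) :
  br x (\sum_(i <- r | P i) g i) = \sum_(i <- r | P i) br x (g i).
Proof. exact: (big_morph (br x) (brDr x) (br0r x)). Qed.
Lemma br_suml x I (r : seq I) (P : pred I) (g : I -> V) :
  br (\sum_(i <- r | P i) g i) x = \sum_(i <- r | P i) br (g i) x.
Proof. exact: (big_morph (br ^~ x) (fun a b => brDl a b x) (br0l x)). Qed.

Lemma hom0 b : hom b 0.
Proof. by case: Hlie => [[? _] [? _] _ _ _]; case: b. Qed.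
Lemma homD b x y : hom b x -> hom b y -> hom b (x + y).
Proof. by case: Hlie => [[_ [? _]] [_ [? _]] _ _ _]; case: b => /=; auto. Qed.
Lemma homZ b c x : hom b x -> hom b (c *: x).
Proof. by case: Hlie => [[_ [_ ?]] [_ [_ ?]] _ _ _]; case: b => /=; auto. Qed.

Variable n : nat.
Variables (e f h : 'I_n.+1 -> V).
Hypotheses (He0 : od (e ord0)) (Hf0 : od (f ord0))
  (Hef : forall i, i != ord0 -> ev (e i) /\ ev (f i)) (Hh : forall I, ev (h I)).

Notation U := (Ugr br e f h).

Lemma Ugr_hom d x : U d x -> hom (odd (absz d)) x.
Proof.
elim => //=; try by [].
- by move=> i /Hef [].
- by move=> i /Hef [].
- by move=> *; apply: hom0.
- by move=> *; apply: homD.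
- by move=> *; apply: homZ.
- by move=> p q x1 y1 _ Hx _ Hy; rewrite oddzD; apply: br_par.
Qed.

Lemma Ugr_eq d d' x : d = d' -> U d x -> U d' x.
Proof. by move=> ->. Qed.
Lemma Ugr_opp d x : U d x -> U d (- x).
Proof. by move=> H; rewrite -scaleN1r; apply: gr_scale. Qed.
Lemma Ugr_sum d I (r : seq I) (P : pred I) (g : I -> V) :
  (forall i, P i -> U d (g i)) -> U d (\sum_(i <- r | P i) g i).
Proof.
move=> H; apply: (big_ind (U d)) => //; first exact: gr_zero.
by move=> ??; apply: gr_add.
Qed.


Variable form : V -> V -> R.
Hypotheses (Hfl : forall x (c : R) y z, form x (c *: y + z) = c * form x y + form x z)
 (Hfr : forall z (c : R) x y, form (c *: x + y) z = c * form x z + form y z)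
 (Hinv : forall x y z, form (br x y) z = form x (br y z))
 (Hsym : forall s t x y, hom s x -> hom t y -> form x y = (-1) ^+ (s && t) * form y x).

Lemma form0r x : form x 0 = 0.
Proof.
have H : form x 0 = form x 0 + form x 0 by have := Hfl x 1 0 0; rewrite scaler0 addr0 mul1r.
by apply: (@addrI _ (form x 0)); rewrite addr0 -H.
Qed.
Lemma form0l x : form 0 x = 0.
Proof.
have H : form 0 x = form 0 x + form 0 x by have := Hfr x 1 0 0; rewrite scaler0 addr0 mul1r.
by apply: (@addrI _ (form 0 x)); rewrite addr0 -H.
Qed.
Lemma formDr x y z : form x (y + z) = form x y + form x z.
Proof. by have := Hfl x 1 y z; rewrite scale1r mul1r. Qed.
Lemma formDl x y z : form (x + y) z = form x z + form y z.
Proof. by have := Hfr z 1 x y; rewrite scale1r mul1r. Qed.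
Lemma formZr x c y : form x (c *: y) = c * form x y.
Proof. by have := Hfl x c y 0; rewrite addr0 form0r addr0. Qed.
Lemma formZl x c y : form (c *: x) y = c * form x y.
Proof. by have := Hfr y c x 0; rewrite addr0 form0l addr0. Qed.
Lemma formNl x y : form (- x) y = - form x y.
Proof. by rewrite -scaleN1r formZl mulN1r. Qed.
Lemma form_sumr x I (r : seq I) (P : pred I) (g : I -> V) :
  form x (\sum_(i <- r | P i) g i) = \sum_(i <- r | P i) form x (g i).
Proof. exact: (big_morph (form x) (formDr x) (form0r x)). Qed.
Lemma form_suml x I (r : seq I) (P : pred I) (g : I -> V) :
  form (\sum_(i <- r | P i) g i) x = \sum_(i <- r | P i) form (g i) x.
Proof. exact: (big_morph (form ^~ x) (fun a b => formDl a b x) (form0l x)). Qed.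

Variables (M : finType) (E F : M -> V).
Hypotheses (HE : is_basis_of (U (-1)) E) (HFb : forall m, U 1 (F m))
  (HEF : forall m m', form (E m) (F m') = (m == m')%:R).

Lemma HEb m : U (-1) (E m). Proof. by case: HE. Qed.

Lemma expandE v : U (-1) v -> v = \sum_k form v (F k) *: E k.
Proof.
case: HE => _ _ Hsp /Hsp [c ->].
apply: eq_bigr => k _; congr (_ *: _).
rewrite form_suml (bigD1 k) //= formZl HEF eqxx mulr1 big1 ?addr0 // => j Hj.
by rewrite formZl HEF (negPf Hj) mulr0.
Qed.

Lemma nondeg v w : U (-1) v -> U (-1) w ->
  (forall t, form v (F t) = form w (F t)) -> v = w.
Proof.
move=> Hv Hw Ht; rewrite (expandE Hv) (expandE Hw).
by apply: eq_bigr => k _; rewrite Ht.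
Qed.

Lemma nest_cons (G : M -> V) m s : s != [::] -> nest br G (m :: s) = br (G m) (nest br G s).
Proof. by case: s. Qed.

Lemma Ugr_nestE s : U (- (size s)%:Z) (nest br E s).
Proof.
elim: s => [|m s IH]; first exact: gr_zero.
case: s IH => [|m' s] IH; first exact: HEb.
rewrite nest_cons //; apply: Ugr_eq (gr_br (HEb m) IH) => /=; lia.
Qed.

Lemma Ugr_nestF s : U (size s)%:Z (nest br F s).
Proof.
elim: s => [|m s IH]; first exact: gr_zero.
case: s IH => [|m' s] IH; first exact: HFb.
rewrite nest_cons //; apply: Ugr_eq (gr_br (HFb m) IH) => /=; lia.
Qed.

Lemma hom_nestE s : hom (odd (size s)) (nest br E s).
Proof. by have := Ugr_hom (Ugr_nestE s); rewrite abszN absz_nat. Qed.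
Lemma hom_nestF s : hom (odd (size s)) (nest br F s).
Proof. by have := Ugr_hom (Ugr_nestF s); rewrite absz_nat. Qed.
Lemma homE m : hom true (E m). Proof. exact: (Ugr_hom (HEb m)). Qed.
Lemma homF m : hom true (F m). Proof. exact: (Ugr_hom (HFb m)). Qed.


Lemma set_nth_nnil (x0 : M) s i k : set_nth x0 s i k != [::].
Proof. by case: s; case: i. Qed.

Lemma der D (c : M -> M -> R) (m0 : M) s : hom false D ->
  (forall k, br D (E k) = \sum_j c k j *: E j) -> s != [::] ->
  br D (nest br E s) =
  \sum_(0 <= i < size s) \sum_k c (nth m0 s i) k *: nest br E (set_nth m0 s i k).
Proof.
move=> HDh HD; elim: s => [|x s IH] // _.
case: s IH => [|y s] IH.
  by rewrite big_nat1 /= HD.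
rewrite nest_cons // (br_jac (s:=false) (t:=true) _ HDh (homE x)) -[false && true]/false expr0 scale1r.
rewrite HD br_suml IH // br_sumr [in RHS]big_nat_recl //; congr (_ + _).
  by apply: eq_bigr => k _; rewrite brZl.
apply: eq_bigr => i _; rewrite br_sumr; apply: eq_bigr => k _; rewrite brZr.
have -> : set_nth m0 [:: x, y & s] i.+1 k = x :: set_nth m0 (y :: s) i k by [].
by rewrite nest_cons // set_nth_nnil.
Qed.

Inductive SpanE (L : nat) : V -> Prop :=
| sp_nest s : size s = L -> SpanE L (nest br E s)
| sp0 : SpanE L 0
| spD x y : SpanE L x -> SpanE L y -> SpanE L (x + y)
| spZ (c : R) x : SpanE L x -> SpanE L (c *: x).

Lemma SpanE_sum L I (r : seq I) (P : pred I) (g : I -> V) :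
  (forall i, P i -> SpanE L (g i)) -> SpanE L (\sum_(i <- r | P i) g i).
Proof.
move=> H; apply: (big_ind (SpanE L)) => //; first exact: sp0.
by move=> ??; apply: spD.
Qed.

Lemma SpanE_brE L a v : (0 < L)%N -> SpanE L v -> SpanE L.+1 (br (E a) v).
Proof.
move=> HL; elim => [s Hs| |x y _ Hx _ Hy|c x _ Hx].
- have Hn : s != [::] by case: s Hs => // Hs0; move: HL; rewrite -Hs0.
  rewrite -(nest_cons E a Hn); by apply: sp_nest => /=; rewrite Hs.
- by rewrite br0r; apply: sp0.
- by rewrite brDr; apply: spD.
- by rewrite brZr; apply: spZ.
Qed.

Lemma SpanE_der D s : hom false D -> U 0 D -> s != [::] ->
  SpanE (size s) (br D (nest br E s)).
Proof.
move=> HDh HD Hs.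
case: s Hs => [//|m0 s'] Hs.
have HDk k : br D (E k) = \sum_j form (br D (E k)) (F j) *: E j.
  by apply: expandE; apply: Ugr_eq (gr_br HD (HEb k)).
rewrite (der m0 HDh HDk Hs) big_mkord.
apply: SpanE_sum => i _; apply: SpanE_sum => k _; apply: spZ; apply: sp_nest.
by rewrite size_set_nth; apply/maxn_idPr; rewrite ltn_ord.
Qed.

Lemma SpanE_1 v : U (-1) v -> SpanE 1 v.
Proof.
move=> /expandE ->; apply: SpanE_sum => k _; apply: spZ.
exact: (sp_nest (s := [:: k])).
Qed.

Lemma SpanE_F t s : (2 <= size s)%N -> SpanE (size s).-1 (br (F t) (nest br E s)).
Proof.
elim: s => [|x s IH] //.
case: s IH => [|y s] IH // _.
rewrite nest_cons // (br_jac (s:=true) (t:=true) _ (homF t) (homE x)) /= expr1 scaleN1r.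
apply: spD.
  apply: (SpanE_der (s := y :: s)) => //.
    exact: (br_par (homF t) (homE x)).
  by apply: Ugr_eq (gr_br (HFb t) (HEb x)).
rewrite -scaleN1r; apply: spZ.
case: s IH => [|z s] IH.
  apply: SpanE_1.
  have H0 : U 0 (br (F t) (E y)) by apply: Ugr_eq (gr_br (HFb t) (HEb y)).
  by apply: Ugr_eq (gr_br (HEb x) H0).
have := IH isT => /= H.
by apply: SpanE_brE.
Qed.


Variable a : nat -> R.
Hypothesis Ha1 : a 1%N = 1.

Lemma Xpair m t s q : size s = size q ->
  form (Xop br E F a m s q) (F t) =
  - ((a (size s))^-1 * form (br (br (F t) (E m)) (nest br E s)) (nest br F q)).
Proof.
move=> Hsq; rewrite /Xop formZl.
have Hx : U (-1) (br (E m) (br (nest br E s) (nest br F q))).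
  by apply: Ugr_eq (gr_br (HEb m) (gr_br (Ugr_nestE s) (Ugr_nestF q))); rewrite Hsq; lia.
rewrite (Hsym (Ugr_hom Hx) (homF t)) /= expr1 mulN1r -!Hinv.
by rewrite mulrN.
Qed.

Lemma Ugr_Xop m s q : size s = size q -> U (-1) (Xop br E F a m s q).
Proof.
move=> Hsq; apply: gr_scale.
by apply: Ugr_eq (gr_br (HEb m) (gr_br (Ugr_nestE s) (Ugr_nestF q))); rewrite Hsq; lia.
Qed.

Lemma part1 p (Hp : (2 <= p)%N) (Pp : p.-tuple M -> p.-tuple M -> R)
  (Hap : a p != 0)
  (Hpair : forall S T : p.-tuple M, form (nest br E S) (nest br F T) = a p * Pp S T)
  (m : M) (N Q : p.-tuple M) :
  Xop br E F a m N Q =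
  \sum_(K : p.-tuple M) \sum_(i < p)
     (Pp K Q * \prod_(j < p | j != i) (tnth N j == tnth K j)%:R) *:
       Xop br E F a m [:: tnth N i] [:: tnth K i].
Proof.
have HsNQ : size N = size Q by rewrite !size_tuple.
apply: nondeg.
- exact: Ugr_Xop.
- by apply: Ugr_sum => K _; apply: Ugr_sum => i _; apply: gr_scale; apply: Ugr_Xop.
move=> t.
set D := br (F t) (E m).
have HDh : hom false D by exact: (br_par (homF t) (homE m)).
have HD0 : U 0 D by apply: Ugr_eq (gr_br (HFb t) (HEb m)).
have HDk k : br D (E k) = \sum_j form (br D (E k)) (F j) *: E j.
  by apply: expandE; apply: Ugr_eq (gr_br HD0 (HEb k)).
have HN0 : (N : seq M) != [::] by rewrite -size_eq0 size_tuple; case: p Hp {Hap Hpair Pp N Q HsNQ}.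
transitivity (- \sum_(i < p) \sum_k form (br D (E (tnth N i))) (F k) * Pp (tset N i k) Q).
  rewrite (Xpair _ _ HsNQ) (der m HDh HDk HN0) size_tuple big_mkord.
  rewrite form_suml mulr_sumr; congr (- _); apply: eq_bigr => i _.
  rewrite form_suml mulr_sumr; apply: eq_bigr => k _.
  rewrite formZl -(tset_val m N i k) Hpair (tnth_nth m).
  by rewrite mulrCA mulKf // mulrC.
symmetry; rewrite form_suml.
under eq_bigr => K _ do rewrite form_suml.
rewrite exchange_big /= -sumrN; apply: eq_bigr => i _.
under eq_bigr => K _ do rewrite formZl Xpair // Ha1 invr1 mul1r mulrN.
rewrite sumrN (reidx1 N i (Pp ^~ Q) (fun k => form (br D (E (tnth N i))) (F k))).
by congr (- _); apply: eq_bigr => k _; rewrite mulrC.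
Qed.


Lemma part3 m q r :
  Yop br E F a [:: m] [:: q; r] =
  - Xop br E F a q [:: r] [:: m] - Xop br E F a r [:: q] [:: m].
Proof.
rewrite /Yop /Xop /= Ha1 invr1 !scale1r.
rewrite (br_jac _ (homF m) (homE q)) /= expr1 scaleN1r.
rewrite (br_anti (homF m) (homE q)) /= expr1 scaleN1r opprK.
rewrite (br_anti (homF m) (homE r)) /= expr1 scaleN1r opprK.
rewrite (br_anti (br_par (homE q) (homF m)) (homE r)) /= expr0 scale1r.
by rewrite addrC.
Qed.

Lemma SpanE_lin k (phi psi : V -> R)
  (Hphi : forall c x y, phi (c *: x + y) = c * phi x + phi y)
  (Hpsi : forall c x y, psi (c *: x + y) = c * psi x + psi y)
  (Hb : forall s, size s = k -> phi (nest br E s) = psi (nest br E s)) v :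
  SpanE k v -> phi v = psi v.
Proof.
have Z0 (g : V -> R) : (forall c x y, g (c *: x + y) = c * g x + g y) -> g 0 = 0.
  move=> Hg; have := Hg 1 0 0; rewrite scaler0 addr0 mul1r => H.
  by apply: (@addrI _ (g 0)); rewrite addr0 -H.
elim => [s Hs | | x y _ Hx _ Hy | c x _ Hx].
- exact: Hb.
- by rewrite (Z0 _ Hphi) (Z0 _ Hpsi).
- by have := Hphi 1 x y; have := Hpsi 1 x y; rewrite !scale1r !mul1r => -> ->; rewrite Hx Hy.
- by have := Hphi c x 0; have := Hpsi c x 0; rewrite !addr0 (Z0 _ Hphi) (Z0 _ Hpsi) !addr0 => -> ->; rewrite Hx.
Qed.


Lemma part2 k (Hk : (1 <= k)%N) (Hak : a k != 0) (Hap : a k.+1 != 0)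
  (PP : k.+1.-tuple M -> k.+1.-tuple M -> R)
  (Hpairp : forall S T : k.+1.-tuple M, form (nest br E S) (nest br F T) = a k.+1 * PP S T)
  (Hexp : forall s : k.-tuple M, nest br E s =
      \sum_(K' : k.-tuple M) ((a k)^-1 * form (nest br E s) (nest br F K')) *: nest br E K')
  (N : k.+1.-tuple M) (m1 : M) (Ms : k.+1.-tuple M) :
  Yop br E F a N (m1 :: Ms) =
  - (\sum_(K : k.+1.-tuple M) (PP K N * (head m1 K == m1)%:R) *: Yop br E F a (behead K) Ms)
  - Xop br E F a m1 Ms N.
Proof.
have HMs0 : (Ms : seq M) != [::] by rewrite -size_eq0 size_tuple.
have HsN : size N = k.+1 by rewrite size_tuple.
have HsMs : size Ms = k.+1 by rewrite size_tuple.
set G := br (nest br F N) (E m1).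
have StepA : Yop br E F a N (m1 :: Ms) =
    (a k.+1)^-1 *: br G (nest br E Ms) - Xop br E F a m1 Ms N.
  rewrite /Yop /Xop HsN nest_cons // (br_jac _ (hom_nestF N) (homE m1)).
  rewrite (br_anti (hom_nestF N) (hom_nestE Ms)) HsN HsMs andbT andbb.
  rewrite brNr brZr scalerN scalerA -signr_addb addbb expr0 scale1r.
  by rewrite scalerDr scalerN.
rewrite StepA; congr (_ - _).
apply: nondeg.
- apply: gr_scale; apply: Ugr_eq (gr_br (gr_br (Ugr_nestF N) (HEb m1)) (Ugr_nestE Ms)).
  by rewrite HsN HsMs; lia.
- apply: Ugr_opp; apply: Ugr_sum => K _; apply: gr_scale; apply: gr_scale.
  apply: Ugr_eq (gr_br (Ugr_nestF (behead K)) (Ugr_nestE Ms)).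
  by rewrite size_behead size_tuple HsMs /=; lia.
move=> t.
set Z := br (nest br E Ms) (F t).
have HZ : SpanE k Z.
  rewrite /Z (br_anti (hom_nestE Ms) (homF t)) -scaleN1r scalerA; apply: spZ.
  by have := SpanE_F t (s := Ms); rewrite HsMs; apply.
rewrite formZl Hinv /G Hinv -/Z.
rewrite formNl form_suml.
under eq_bigr => K _ do rewrite formZl /Yop formZl Hinv -/Z size_behead size_tuple /=.
clearbody Z.
apply: (SpanE_lin (k := k)
  (phi := fun v => (a k.+1)^-1 * form (nest br F N) (br (E m1) v))
  (psi := fun v => - \sum_(K : k.+1.-tuple M) PP K N * (head m1 K == m1)%:R *
     ((a k)^-1 * form (nest br F (behead K)) v))) HZ => /=.
- by move=> c x y; rewrite brDr brZr formDr formZr; ring.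
- move=> c x y; rewrite mulrN mulr_sumr -opprD -big_split /=; congr (- _); apply: eq_bigr => K _.
  by rewrite formDr formZr; ring.
move=> s Hs.
set S : k.-tuple M := Tuple (introT eqP Hs).
have Hs0 : s != [::] by rewrite -size_eq0 Hs -lt0n.
have -> : nest br E s = nest br E S by [].
rewrite -(nest_cons E m1 Hs0).
have -> : nest br E (m1 :: s) = nest br E (cons_tuple m1 S) by [].
rewrite (Hsym (hom_nestF N) (hom_nestE _)) Hpairp HsN size_tuple andbb.
have Key : PP (cons_tuple m1 S) N = \sum_(K' : k.-tuple M)
    ((a k)^-1 * form (nest br E S) (nest br F K')) * PP (cons_tuple m1 K') N.
  apply: (mulfI Hap); rewrite -Hpairp mulr_sumr.
  have -> : nest br E (cons_tuple m1 S) = br (E m1) (nest br E S) by rewrite -nest_cons.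
  rewrite {1}Hexp br_sumr form_suml; apply: eq_bigr => K' _.
  rewrite brZr formZl -(nest_cons E m1 (s := K')) ?Hpairp.
    by ring.
  by rewrite -size_eq0 size_tuple -lt0n.
rewrite Key big_tuple_cons.
rewrite (eq_bigr (fun x => (x == m1)%:R * \sum_(K' : k.-tuple M) PP (cons_tuple x K') N *
   ((a k)^-1 * form (nest br F K') (nest br E S)))); last first.
  by move=> x _; rewrite mulr_sumr; apply: eq_bigr => K' _ /=; ring.
rewrite sum_delta mulrCA mulKf // mulr_sumr -sumrN; apply: eq_bigr => K' _.
rewrite (Hsym (hom_nestF K') (hom_nestE S)) !size_tuple andbb /= signrN.
ring.
Qed.


Lemma Hexp_gen k (Hk : (1 <= k)%N) (Hak : a k != 0) (Pk : k.-tuple M -> k.-tuple M -> R)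
  (HPEk : (2 <= k)%N -> forall S : k.-tuple M, nest br E S = \sum_(T : k.-tuple M) Pk S T *: nest br E T)
  (Hpk : (2 <= k)%N -> forall S T : k.-tuple M, form (nest br E S) (nest br F T) = a k * Pk S T)
  (s : k.-tuple M) :
  nest br E s = \sum_(K' : k.-tuple M) ((a k)^-1 * form (nest br E s) (nest br F K')) *: nest br E K'.
Proof.
case: k Hk Hak Pk HPEk Hpk s => [//|[|k]] Hk Hak Pk HPEk Hpk s; last first.
  rewrite {1}HPEk //; apply: eq_bigr => T _; by rewrite Hpk // mulKf.
rewrite big_tuple_cons.
under eq_bigr => x _ do rewrite big_tuple0.
case: s => [[|y [|? ?]] //= Hs].
by rewrite Ha1 invr1 {1}(expandE (HEb y)); apply: eq_bigr => x _; rewrite mul1r.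
Qed.

End Work.


Theorem corollary1 (n : nat) (Hn : (4 <= n <= 8)%N)
  (R : realType) (V : lmodType R)
  (ev od : V -> Prop) (br : V -> V -> V) (e f h : 'I_n.+1 -> V)
  (HU : is_U ev od br e f h)
  (form : V -> V -> R) (Hform : is_U_form ev od br e f h form)
  (M : finType) (E F : M -> V)
  (HE : is_basis_of (Ugr br e f h (-1)) E)
  (HF : is_basis_of (Ugr br e f h 1) F)
  (HEF : forall m m', form (E m) (F m') = (m == m')%:R)
  (P : forall k : nat, k.-tuple M -> k.-tuple M -> R)
  (HPid : forall k, (2 <= k)%N -> forall S T : k.-tuple M,
      \sum_(W : k.-tuple M) P k S W * P k W T = P k S T)
  (HPE : forall k, (2 <= k)%N -> forall S : k.-tuple M,
      nest br E S = \sum_(T : k.-tuple M) P k S T *: nest br E T)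
  (HPF : forall k, (2 <= k)%N -> forall T : k.-tuple M,
      nest br F T = \sum_(S : k.-tuple M) P k S T *: nest br F S)
  (p : nat) (Hp : (2 <= p)%N) (a : nat -> R) (Ha1 : a 1%N = 1)
  (Ha0 : forall k, (2 <= k <= p)%N -> a k != 0)
  (Hpair : forall k, (2 <= k <= p)%N -> forall S T : k.-tuple M,
      form (nest br E S) (nest br F T) = a k * P k S T) :
  [/\ (forall (m : M) (N Q : p.-tuple M),
        Xop br E F a m N Q =
        \sum_(K : p.-tuple M) \sum_(i < p)
           (P p K Q * \prod_(j < p | j != i) (tnth N j == tnth K j)%:R) *:
             Xop br E F a m [:: tnth N i] [:: tnth K i]),
      (forall (N : p.-tuple M) (m1 : M) (Ms : p.-tuple M),
        Yop br E F a N (m1 :: Ms) =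
        - (\sum_(K : p.-tuple M)
             (P p K N * (head m1 K == m1)%:R) *: Yop br E F a (behead K) Ms)
        - Xop br E F a m1 Ms N) &
      (forall m q r : M,
        Yop br E F a [:: m] [:: q; r] =
        - Xop br E F a q [:: r] [:: m] - Xop br E F a r [:: q] [:: m])].
Proof.
case: HU => Hlie [He0 Hf0 Hef Hh] _ _ _.
case: Hform => [[Hfl Hfr] Hinv Hsym _ _].
have HFb : forall m, Ugr br e f h 1 (F m) by case: HF.
have Hap : a p != 0 by apply: Ha0; rewrite Hp leqnn.
have Hpp : forall S T : p.-tuple M, form (nest br E S) (nest br F T) = a p * P p S T.
  by apply: Hpair; rewrite Hp leqnn.
split.
- move=> m N Q.
  exact: (part1 Hlie He0 Hf0 Hef Hh Hfr Hinv Hsym HE HFb HEF Ha1 Hp Hap Hpp).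
- case: p Hp Ha0 Hpair Hap Hpp => [//|k] Hp Ha0 Hpair Hap Hpp N m1 Ms.
  have Hk : (1 <= k)%N by [].
  have Hak : a k != 0.
    case: k Hk {Hp Hpair Hap Hpp N Ms} Ha0 => [//|[|k]] _ Ha0; first by rewrite Ha1 oner_eq0.
    by apply: Ha0; rewrite /= ltnW.
  apply: (part2 Hlie He0 Hf0 Hef Hh Hfl Hfr Hinv Hsym HE HFb HEF Hk Hak Hap Hpp).
  move=> s; apply: (Hexp_gen Hfr HE HEF Ha1 Hk Hak (Pk := P k)).
    by move=> Hk2; apply: HPE.
  by move=> Hk2; apply: Hpair; rewrite Hk2 leqnSn.
- move=> m q r.
  exact: (part3 Hlie He0 Hf0 Hef Hh HE HFb Ha1).
Qed.
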